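(* Let $C>0$. Then there exist $h_1\in(0,1)$ and $\varepsilon_0>0$ such that for all $h\in(0,h_1)$, for every subgroup $\widetilde\Gamma\subseteq\Gamma$ of finite index with $\widetilde X=\widetilde\Gamma\backslash\mathbb H$, for all $N\in\mathbb N$ with $N\le\varepsilon_0(\ell_0(\widetilde X)+\log h^{-1})$, for all $j\in\{1,\dots,2m\}$, all $z\in\mathcal D_j$ and all $\alpha,\beta\in\mathcal W_N^j$: if \[ \operatorname{Tr}\bigl(\operatorname{Ind}_{\widetilde\Gamma}^\Gamma\mathbf 1_{\widetilde\Gamma}\bigr)(\gamma_\alpha\gamma_\beta^{-1})\ne0\quad\text{and}\quad |\gamma_\alpha^{-1}.z-\gamma_\beta^{-1}.z|<Ch, \] then $\alpha=\beta$.
   Context: $\Gamma$ is a Schottky group given by a geometric construction: $m\in\mathbb N$, open Euclidean disks $\mathcal D_1,\dots,\mathcal D_{2m}\subset\mathbb C$ centered on $\mathbb R$ with pairwise disjoint closures, and $\gamma_1,\dots,\gamma_m\in\mathrm{PSL}_2(\mathbb R)$ with $\gamma_j$ mapping the exterior of $\mathcal D_j$ onto the interior of $\mathcal D_{j+m}$, freely generating $\Gamma$; $\gamma_j=\gamma_{j-m}^{-1}$ for $j\in\{m+1,\dots,2m\}$, indices mod $2m$. For $\alpha\in\{1,\dots,2m\}^N$, $\gamma_\alpha=\gamma_{\alpha_1}\cdots\gamma_{\alpha_N}$; $\mathcal W_N$ is the set of $\alpha$ with $\alpha_{i+1}\not\equiv\alpha_i+m\pmod{2m}$ for all $i<N$,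 and $\mathcal W_N^j=\{\alpha\in\mathcal W_N:\alpha_1\not\equiv j+m\pmod{2m}\}$. $\operatorname{Ind}_{\widetilde\Gamma}^\Gamma\mathbf 1_{\widetilde\Gamma}$ is the representation induced from the trivial character of $\widetilde\Gamma$. $\ell_0(\widetilde X)$ is the minimal length of a periodic geodesic on $\widetilde X$. *)

(* Defs.v *)
From Stdlib Require Import Reals List Arith ClassicalEpsilon.
Open Scope R_scope.

Definition Cx : Type := (R * R)%type.
Definition RtoC (x : R) : Cx := (x, 0).
Definition Cadd (z w : Cx) : Cx := (fst z + fst w, snd z + snd w).
Definition Csub (z w : Cx) : Cx := (fst z - fst w, snd z - snd w).
Definition Cmul (z w : Cx) : Cx :=
  (fst z * fst w - snd z * snd w, fst z * snd w + snd z * fst w).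
Definition Cnorm2 (z : Cx) : R := fst z * fst z + snd z * snd z.
Definition Cinv (z : Cx) : Cx := (fst z / Cnorm2 z, - snd z / Cnorm2 z).
Definition Cdiv (z w : Cx) : Cx := Cmul z (Cinv w).
Definition Cabs (z : Cx) : R := sqrt (Cnorm2 z).

(** * 2x2 real matrices; elements of PSL2(R) are represented by SL2(R) lifts *)
Record M2 : Type := mkM2 { m11 : R; m12 : R; m21 : R; m22 : R }.
Definition M2id : M2 := mkM2 1 0 0 1.
Definition M2mul (A B : M2) : M2 :=
  mkM2 (m11 A * m11 B + m12 A * m21 B) (m11 A * m12 B + m12 A * m22 B)
       (m21 A * m11 B + m22 A * m21 B) (m21 A * m12 B + m22 A * m22 B).
(* inverse of a determinant-one matrix *)
Definition M2inv (A : M2) : M2 := mkM2 (m22 A) (- m12 A) (- m21 A) (m11 A).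
Definition M2neg (A : M2) : M2 := mkM2 (- m11 A) (- m12 A) (- m21 A) (- m22 A).
Definition M2det (A : M2) : R := m11 A * m22 A - m12 A * m21 A.
Definition M2tr (A : M2) : R := m11 A + m22 A.
(* equality in PSL2(R) = SL2(R)/{+-1} *)
Definition peq (A B : M2) : Prop := A = B \/ A = M2neg B.

(* on finite points (used where the image is known to be finite) *)
Definition mobius_fin (A : M2) (z : Cx) : Cx :=
  Cdiv (Cadd (Cmul (RtoC (m11 A)) z) (RtoC (m12 A)))
       (Cadd (Cmul (RtoC (m21 A)) z) (RtoC (m22 A))).
(* on the Riemann sphere, None = infinity *)
Definition mobius (A : M2) (p : option Cx) : option Cx :=
  match p with
  | Some z =>
      let den := Cadd (Cmul (RtoC (m21 A)) z) (RtoC (m22 A)) in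
      if Req_dec_T (fst den) 0 then
        if Req_dec_T (snd den) 0 then None else Some (mobius_fin A z)
      else Some (mobius_fin A z)
  | None => if Req_dec_T (m21 A) 0 then None else Some (RtoC (m11 A / m21 A))
  end.

Definition in_disk (c r : R) (p : option Cx) : Prop :=
  match p with Some z => Cabs (Csub z (RtoC c)) < r | None => False end.
Definition in_ext (c r : R) (p : option Cx) : Prop :=
  match p with Some z => r < Cabs (Csub z (RtoC c)) | None => True end.

Definition valid_idx (m j : nat) : Prop := (1 <= j <= 2 * m)%nat.
(* j + m mod 2m, on representatives 1..2m *)
Definition opp_idx (m j : nat) : nat := if (j <=? m)%nat then (j + m)%nat else (j - m)%nat.
Definition gen (m : nat) (gam : nat -> M2) (j : nat) : M2 :=
  if (j <=? m)%nat then gam j else M2inv (gam (j - m)%nat).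

Definition schottky_data (m : nat) (c r : nat -> R) (gam : nat -> M2) : Prop :=
  (1 <= m)%nat /\
  (forall j, valid_idx m j -> 0 < r j) /\
  (forall i j, valid_idx m i -> valid_idx m j -> i <> j -> r i + r j < Rabs (c i - c j)) /\
  (forall j, (1 <= j <= m)%nat -> M2det (gam j) = 1) /\
  (forall j, (1 <= j <= m)%nat -> forall w : option Cx,
      in_disk (c (j + m)%nat) (r (j + m)%nat) w <->
      exists p, in_ext (c j) (r j) p /\ mobius (gam j) p = w).

Definition word_eval (m : nat) (gam : nat -> M2) (w : list nat) : M2 :=
  fold_right (fun a acc => M2mul (gen m gam a) acc) M2id w.

Definition in_W (m N : nat) (w : list nat) : Prop :=
  length w = N /\ Forall (valid_idx m) w /\
  (forall i, (S i < length w)%nat -> nth (S i) w 0%nat <> opp_idx m (nth i w 0%nat)).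

Definition in_Wj (m N j : nat) (w : list nat) : Prop :=
  in_W m N w /\ match w with a :: _ => a <> opp_idx m j | nil => True end.

Definition in_Gamma (m : nat) (gam : nat -> M2) (g : M2) : Prop :=
  exists w, Forall (valid_idx m) w /\ peq g (word_eval m gam w).

Definition is_subgroup (m : nat) (gam : nat -> M2) (S : M2 -> Prop) : Prop :=
  (forall g, S g -> in_Gamma m gam g) /\
  S M2id /\
  (forall g h, S g -> S h -> S (M2mul g h)) /\
  (forall g, S g -> S (M2inv g)) /\
  (forall g h, peq g h -> S g -> S h).

(* reps is a complete list of representatives of the right cosets S\Gamma,
   without repetition; its existence is exactly finiteness of the index *)
Definition is_right_transversal (m : nat) (gam : nat -> M2) (S : M2 -> Prop)
    (reps : list M2) : Prop :=
  Forall (in_Gamma m gam) reps /\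
  (forall i k, (i < length reps)%nat -> (k < length reps)%nat -> i <> k ->
     ~ S (M2mul (nth i reps M2id) (M2inv (nth k reps M2id)))) /\
  (forall g, in_Gamma m gam g ->
     exists i, (i < length reps)%nat /\ S (M2mul g (M2inv (nth i reps M2id)))).

(* character of Ind_S^Gamma 1_S at g: number of right cosets S r fixed by g,
   i.e. of r with r g r^{-1} in S *)
Definition ind_trace (S : M2 -> Prop) (reps : list M2) (g : M2) : nat :=
  length (filter (fun r => if excluded_middle_informative
                                (S (M2mul (M2mul r g) (M2inv r)))
                           then true else false) reps).

Definition arcosh (x : R) : R := ln (x + sqrt (x * x - 1)).
Definition hyp_length (g : M2) : R := 2 * arcosh (Rabs (M2tr g) / 2).

Definition is_min_geod_length (S : M2 -> Prop) (l0 : R) : Prop :=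
  (exists g, S g /\ ~ peq g M2id /\ hyp_length g = l0) /\
  (forall g, S g -> ~ peq g M2id -> l0 <= hyp_length g).

(* Main.v *)
Require Import Defs.
From Stdlib Require Import Reals List Arith ClassicalEpsilon Lra Lia.
Open Scope R_scope.

Ltac m2ext := repeat match goal with A : M2 |- _ => destruct A end;
  unfold M2mul, M2inv, M2neg, M2id, M2det, M2tr in *; simpl in *;
  lazymatch goal with |- @eq M2 _ _ => f_equal; ring | _ => ring end.

Lemma M2mul_assoc A B D : M2mul (M2mul A B) D = M2mul A (M2mul B D).
Proof. m2ext. Qed.
Lemma M2mul_id_l A : M2mul M2id A = A. Proof. m2ext. Qed.
Lemma M2mul_id_r A : M2mul A M2id = A. Proof. m2ext. Qed.
Lemma M2inv_mul A B : M2inv (M2mul A B) = M2mul (M2inv B) (M2inv A). Proof. m2ext. Qed.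
Lemma M2inv_inv A : M2inv (M2inv A) = A. Proof. m2ext. Qed.
Lemma M2inv_neg A : M2inv (M2neg A) = M2neg (M2inv A). Proof. m2ext. Qed.
Lemma M2det_mul A B : M2det (M2mul A B) = M2det A * M2det B. Proof. m2ext. Qed.
Lemma M2det_inv A : M2det (M2inv A) = M2det A. Proof. m2ext. Qed.
Lemma M2det_neg A : M2det (M2neg A) = M2det A. Proof. m2ext. Qed.
Lemma M2mul_inv_r A : M2det A = 1 -> M2mul A (M2inv A) = M2id.
Proof. destruct A; unfold M2mul, M2inv, M2id, M2det; simpl; intro H; f_equal; lra. Qed.
Lemma M2mul_inv_l A : M2det A = 1 -> M2mul (M2inv A) A = M2id.
Proof. destruct A; unfold M2mul, M2inv, M2id, M2det; simpl; intro H; f_equal; lra. Qed.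
Lemma M2mul_neg_l A B : M2mul (M2neg A) B = M2neg (M2mul A B). Proof. m2ext. Qed.
Lemma M2tr_conj r g : M2tr (M2mul (M2mul r g) (M2inv r)) = M2det r * M2tr g.
Proof. destruct r, g; unfold M2mul, M2inv, M2det, M2tr; simpl; ring. Qed.

Definition Frob (A : M2) : R := m11 A * m11 A + m12 A * m12 A + m21 A * m21 A + m22 A * m22 A.
Lemma Frob_ge0 A : 0 <= Frob A.
Proof. unfold Frob; nra. Qed.
Lemma Frob_mul A B : Frob (M2mul A B) <= Frob A * Frob B.
Proof.
  destruct A as [a b c d], B as [e f g h]; unfold Frob, M2mul; simpl.
  assert (E: (a*a+b*b+c*c+d*d)*(e*e+f*f+g*g+h*h) -
    ((a*e+b*g)*(a*e+b*g) + (a*f+b*h)*(a*f+b*h) + (c*e+d*g)*(c*e+d*g) + (c*f+d*h)*(c*f+d*h))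
    = (a*g-b*e)*(a*g-b*e) + (a*h-b*f)*(a*h-b*f) + (c*g-d*e)*(c*g-d*e) + (c*h-d*f)*(c*h-d*f)) by ring.
  assert (0 <= (a*g-b*e)*(a*g-b*e) + (a*h-b*f)*(a*h-b*f) + (c*g-d*e)*(c*g-d*e) + (c*h-d*f)*(c*h-d*f))
    by (repeat apply Rplus_le_le_0_compat; apply Rle_0_sqr).
  lra.
Qed.
Lemma Frob_inv A : Frob (M2inv A) = Frob A.
Proof. destruct A; unfold Frob, M2inv; simpl; ring. Qed.
Lemma tr_Frob A : M2tr A * M2tr A <= 2 * Frob A.
Proof. destruct A as [a b c d]; unfold Frob, M2tr; simpl.
  pose proof (Rle_0_sqr (a-d)); pose proof (Rle_0_sqr b); pose proof (Rle_0_sqr c); unfold Rsqr in *; nra. Qed.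

Lemma word_eval_snoc m gam l a :
  word_eval m gam (l ++ a :: nil) = M2mul (word_eval m gam l) (gen m gam a).
Proof.
  induction l; simpl.
  - rewrite M2mul_id_r, M2mul_id_l; auto.
  - rewrite IHl, M2mul_assoc; auto.
Qed.

Lemma oppidx_valid m a : valid_idx m a -> valid_idx m (opp_idx m a).
Proof. unfold valid_idx, opp_idx; destruct (a <=? m)%nat eqn:E;
  [apply Nat.leb_le in E | apply Nat.leb_gt in E]; lia. Qed.
Lemma oppidx_inv m a : valid_idx m a -> opp_idx m (opp_idx m a) = a.
Proof. unfold valid_idx, opp_idx; intro.
  destruct (a <=? m)%nat eqn:E;
  [apply Nat.leb_le in E | apply Nat.leb_gt in E].
  - destruct (a + m <=? m)%nat eqn:F; [apply Nat.leb_le in F | apply Nat.leb_gt in F]; lia.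
  - destruct (a - m <=? m)%nat eqn:F; [apply Nat.leb_le in F | apply Nat.leb_gt in F]; lia.
Qed.

Lemma gen_det m c r gam a : schottky_data m c r gam -> valid_idx m a -> M2det (gen m gam a) = 1.
Proof.
  intros (H1 & H2 & H3 & H4 & H5) Ha; unfold valid_idx, gen in *.
  destruct (a <=? m)%nat eqn:E; [apply Nat.leb_le in E | apply Nat.leb_gt in E].
  - apply H4; lia.
  - rewrite M2det_inv; apply H4; lia.
Qed.

Lemma word_det m c r gam w : schottky_data m c r gam -> Forall (valid_idx m) w ->
  M2det (word_eval m gam w) = 1.
Proof.
  intros H; induction 1; simpl.
  - unfold M2det, M2id; simpl; ring.
  - rewrite M2det_mul, IHForall, (gen_det m c r gam x); auto; ring.
Qed.

Lemma Gamma_det m c r gam g : schottky_data m c r gam -> in_Gamma m gam g -> M2det g = 1.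
Proof.
  intros H [w [Hw [E|E]]]; subst; [|rewrite M2det_neg]; eapply word_det; eauto.
Qed.
Lemma M2mul_neg_r A B : M2mul A (M2neg B) = M2neg (M2mul A B). Proof. m2ext. Qed.

Lemma conj_back r g : M2det r = 1 ->
  M2mul (M2mul (M2inv r) (M2mul (M2mul r g) (M2inv r))) r = g.
Proof.
  intro H. rewrite !M2mul_assoc, M2mul_inv_l, M2mul_id_r by auto.
  rewrite <- M2mul_assoc, M2mul_inv_l, M2mul_id_l by auto. reflexivity.
Qed.

Lemma trace_witness S reps g : ind_trace S reps g <> 0%nat ->
  exists rr, In rr reps /\ S (M2mul (M2mul rr g) (M2inv rr)).
Proof.
  unfold ind_trace. intro H.
  destruct (filter _ reps) as [|x l] eqn:E; [simpl in H; congruence|].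
  assert (Hx : In x (x :: l)) by (left; auto). rewrite <- E in Hx.
  apply filter_In in Hx as [Hin Hb]. exists x; split; auto.
  destruct excluded_middle_informative; [auto|discriminate].
Qed.

Lemma Frob_word m gam G w : 1 <= G -> (forall a, valid_idx m a -> Frob (gen m gam a) <= G) ->
  Forall (valid_idx m) w -> Frob (word_eval m gam w) <= 2 * G ^ length w.
Proof.
  intros HG Hg; induction 1; simpl.
  - unfold Frob, M2id; simpl; lra.
  - eapply Rle_trans; [apply Frob_mul|].
    pose proof (Frob_ge0 (gen m gam x)); pose proof (Frob_ge0 (word_eval m gam l)).
    pose proof (Hg x H). pose proof (pow_le G (length l) ltac:(lra)).
    assert (Frob (gen m gam x) * Frob (word_eval m gam l) <= G * (2 * G ^ length l))
      by (apply Rmult_le_compat; auto).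
    lra.
Qed.

Lemma ln_le' x y : 0 < x -> x <= y -> ln x <= ln y.
Proof. intros Hx Hxy. destruct (Rle_lt_or_eq_dec _ _ Hxy) as [H|H].
  - left; apply ln_increasing; auto.
  - rewrite H; lra. Qed.

Lemma hyp_bound g : hyp_length g <= 2 * ln (Rabs (M2tr g) + 1).
Proof.
  unfold hyp_length, arcosh. set (t := Rabs (M2tr g)). set (x := t / 2).
  assert (Ht : 0 <= t) by apply Rabs_pos.
  assert (Hs : sqrt (x * x - 1) <= x + 1).
  { destruct (Rle_dec (x * x - 1) 0) as [Hn|Hp].
    - rewrite sqrt_neg_0 by auto. unfold x; lra.
    - rewrite <- (sqrt_square (x + 1)) by (unfold x; lra).
      apply sqrt_le_1_alt. unfold x in *; nra. }
  pose proof (sqrt_pos (x * x - 1)).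
  assert (H1 : 0 <= ln (t + 1)).
  { rewrite <- ln_1. apply ln_le'; lra. }
  destruct (Rlt_dec 0 (x + sqrt (x * x - 1))) as [Hp|Hn].
  - assert (ln (x + sqrt (x * x - 1)) <= ln (t + 1)) by (apply ln_le'; auto; unfold x in *; lra).
    lra.
  - assert (E : ln (x + sqrt (x * x - 1)) = 0).
    { unfold ln. destruct (Rlt_dec 0 _); [contradiction|auto]. }
    rewrite E. lra.
Qed.
Lemma Wj_snoc m n j al : in_Wj m (S n) j al ->
  exists l a, al = l ++ a :: nil /\ in_Wj m n j l /\ valid_idx m a /\ a <> opp_idx m (last l j).
Proof.
  intros [[Hlen [Hval Hadj]] Hfirst].
  destruct (exists_last (l := al)) as [l [a E]].
  { intro; subst; simpl in Hlen; discriminate. }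
  subst al. exists l, a.
  rewrite length_app in Hlen; simpl in Hlen.
  apply Forall_app in Hval as [Hv1 Hv2]. inversion Hv2; subst.
  split; [reflexivity|]. split; [|split; [assumption|]].
  - split; [split; [lia| split; [assumption|]]|].
    + intros i Hi. specialize (Hadj i). rewrite !app_nth1 in Hadj by lia.
      apply Hadj. rewrite length_app; simpl; lia.
    + destruct l; simpl in *; auto.
  - destruct l as [|x l0] eqn:El.
    + simpl in *; auto.
    + destruct (exists_last (l := l)) as [l' [b E']].
      { rewrite El; discriminate. }
      rewrite <- El. rewrite E'. rewrite last_last.
      specialize (Hadj (length l')).
      rewrite <- El, E' in Hadj.
      rewrite !length_app in Hadj; simpl in Hadj.
      rewrite <- app_assoc in Hadj; simpl in Hadj.
      rewrite app_nth2 in Hadj by lia. rewrite app_nth2 in Hadj by lia.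
      rewrite Nat.sub_diag in Hadj. replace (S (length l') - length l')%nat with 1%nat in Hadj by lia.
      simpl in Hadj. apply Hadj; lia.
Qed.

Fixpoint minf (f : nat -> R) (n : nat) : R :=
  match n with O => f O | S n' => Rmin (minf f n') (f n) end.
Lemma minf_le f n k : (k <= n)%nat -> minf f n <= f k.
Proof.
  induction n; intros Hk; simpl.
  - replace k with O by lia; lra.
  - destruct (Nat.eq_dec k (S n)) as [->|Hne].
    + apply Rmin_r.
    + eapply Rle_trans; [apply Rmin_l| apply IHn; lia].
Qed.
Lemma minf_pos f n : (forall k, (k <= n)%nat -> 0 < f k) -> 0 < minf f n.
Proof.
  induction n; intros H; simpl; [apply H; lia|].
  apply Rmin_glb_lt; [apply IHn; intros; apply H; lia| apply H; lia].
Qed.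
Lemma fin_max (f : nat -> R) n : exists B, forall k, (k <= n)%nat -> f k <= B.
Proof.
  induction n.
  - exists (f O); intros k Hk; replace k with O by lia; lra.
  - destruct IHn as [B HB]. exists (Rmax B (f (S n))). intros k Hk.
    destruct (Nat.eq_dec k (S n)) as [->|Hne]; [apply Rmax_r|].
    eapply Rle_trans; [apply HB; lia| apply Rmax_l].
Qed.
Lemma pow_le1 q n : 0 <= q <= 1 -> q ^ n <= 1.
Proof. intros Hq; induction n; simpl; [lra|]. 
  pose proof (pow_le q n (proj1 Hq)). nra. Qed.

Lemma last_valid m j l : valid_idx m j -> Forall (valid_idx m) l -> valid_idx m (last l j).
Proof.
  intros Hj H; induction H; simpl; auto.
  destruct l; auto.
Qed.

Lemma M2inv_id : M2inv M2id = M2id.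
Proof. unfold M2inv, M2id; simpl; f_equal; ring. Qed.

From Coquelicot Require Coquelicot.

Module Aux.
Import Coquelicot.Coquelicot.
Local Open Scope R_scope.
Local Open Scope C_scope.

Definition dn (A : M2) (z : C) : C := RtoC (m21 A) * z + RtoC (m22 A).

Lemma Cinv_eq w : Defs.Cinv w = Cinv w.
Proof. destruct w as [x y]; unfold Defs.Cinv, Cinv, Cnorm2; simpl.
  replace (x*(x*1)+y*(y*1))%R with (x*x+y*y)%R by ring; reflexivity. Qed.

Lemma mf_eq A z : mobius_fin A z = (RtoC (m11 A) * z + RtoC (m12 A)) / dn A z.
Proof. unfold mobius_fin, Defs.Cdiv; rewrite Cinv_eq; reflexivity. Qed.

Lemma Cabs_eq z : Cabs z = Cmod z.
Proof. destruct z as [x y]; unfold Cabs, Cmod, Cnorm2; simpl.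
  replace (x*(x*1)+y*(y*1))%R with (x*x+y*y)%R by ring; reflexivity. Qed.

Lemma in_disk_some cc rr z : in_disk cc rr (Some z) <-> Cmod (z - RtoC cc) < rr.
Proof. unfold in_disk; rewrite Cabs_eq; reflexivity. Qed.
Lemma in_ext_some cc rr z : in_ext cc rr (Some z) <-> rr < Cmod (z - RtoC cc).
Proof. unfold in_ext; rewrite Cabs_eq; reflexivity. Qed.

Lemma mob_some A (z : Cx) : mobius A (Some z) = None \/
  (dn A z <> 0 /\ mobius A (Some z) = Some (mobius_fin A z)).
Proof.
  simpl. destruct (Req_dec_T _ 0) as [e1|n1].
  - destruct (Req_dec_T _ 0) as [e2|n2]; [left; auto|right; split; auto].
    intro H; apply n2. apply (f_equal snd) in H. exact H.
  - right; split; auto. intro H; apply n1. apply (f_equal fst) in H. exact H.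
Qed.

Ltac toC := match goal with |- ?x = ?y => change (@eq C x y) end.

Lemma comp A B z : dn B z <> 0 -> dn A (mobius_fin B z) <> 0 ->
  mobius_fin (M2mul A B) z = mobius_fin A (mobius_fin B z) /\
  dn (M2mul A B) z = dn A (mobius_fin B z) * dn B z.
Proof.
  intros H1 H2. rewrite !mf_eq in *. unfold dn in *.
  destruct A as [a1 b1 c1 d1], B as [a2 b2 c2 d2]; simpl in *.
  rewrite !RtoC_plus, !RtoC_mult.
  assert (E: RtoC c1 * RtoC a2 * z + RtoC c1 * RtoC b2 + (RtoC d1 * RtoC c2 * z + RtoC d1 * RtoC d2)
    = (RtoC c1 * ((RtoC a2 * z + RtoC b2) / (RtoC c2 * z + RtoC d2)) + RtoC d1) * (RtoC c2 * z + RtoC d2))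
   by (field; auto).
  assert (E2 : RtoC c1 * RtoC a2 * z + RtoC c1 * RtoC b2 + (RtoC d1 * RtoC c2 * z + RtoC d1 * RtoC d2) <> 0).
  { rewrite E. apply Cmult_neq_0; auto. }
  split.
  - match goal with |- ?x = ?y => change (@eq C x y) end.
    replace (RtoC c1 * RtoC a2 * z + RtoC d1 * RtoC c2 * z + (RtoC c1 * RtoC b2 + RtoC d1 * RtoC d2))
      with (RtoC c1 * RtoC a2 * z + RtoC c1 * RtoC b2 + (RtoC d1 * RtoC c2 * z + RtoC d1 * RtoC d2)) by ring.
    field. split; [auto|]. intro H; apply E2.
    rewrite <- H. ring.
  - toC. field. auto.
Qed.


Lemma mf_diff A x y : M2det A = 1 -> dn A x <> 0 -> dn A y <> 0 ->
  mobius_fin A x - mobius_fin A y = (x - y) / (dn A x * dn A y).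
Proof.
  intros Hd H1 H2. rewrite !mf_eq. unfold dn in *.
  destruct A as [a b c d]; unfold M2det in Hd; simpl in *.
  assert (E: (a * x + b) / (c * x + d) - (a * y + b) / (c * y + d) =
     ((RtoC a * RtoC d - RtoC b * RtoC c) * (x - y)) / ((c * x + d) * (c * y + d))) by (field; auto).
  toC. rewrite E. rewrite <- !RtoC_mult, <- RtoC_minus, Hd. field. auto.
Qed.

Lemma mf_neg A z : dn A z <> 0 -> mobius_fin (M2neg A) z = mobius_fin A z.
Proof.
  intros H. rewrite !mf_eq. unfold dn in *. destruct A as [a b c d]; unfold M2neg; simpl in *.
  rewrite !RtoC_opp. toC. field. split; auto. intro H'; apply H.
  replace (c * z + d) with (- (- c * z + - d)) by ring. rewrite H'. ring.
Qed.

Lemma mf_id z : mobius_fin M2id z = z /\ dn M2id z = 1.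
Proof. rewrite mf_eq; unfold dn, M2id; simpl. split; toC; field. Qed.

Lemma Cmod_Rdiff (u v : R) : Cmod (RtoC u - RtoC v) = Rabs (u - v).
Proof. rewrite <- RtoC_minus, Cmod_R. reflexivity. Qed.


Lemma map_gen m c r gam a (w : Cx) : schottky_data m c r gam -> valid_idx m a ->
  r (opp_idx m a) < Cmod (w - RtoC (c (opp_idx m a))) ->
  dn (M2inv (gen m gam a)) w <> 0 /\ Cmod (mobius_fin (M2inv (gen m gam a)) w - RtoC (c a)) <= r a.
Proof.
  intros HS Ha Hw. pose proof HS as (H1 & H2 & H3 & H4 & H5).
  unfold valid_idx, gen, opp_idx in *.
  destruct (a <=? m)%nat eqn:E; [apply Nat.leb_le in E | apply Nat.leb_gt in E].
  - assert (Hdet := H4 a ltac:(lia)).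
    remember (gam a) as M eqn:EM.
    assert (Hdn : dn (M2inv M) w <> 0).
    { intro Hz. destruct M as [a0 b0 c0 d0]; unfold M2det in Hdet; simpl in *.
      unfold dn in Hz; simpl in Hz.
      destruct (Req_dec_T c0 0) as [e|n].
      - subst c0. apply (f_equal fst) in Hz. simpl in Hz. nra.
      - assert (Ew : w = RtoC (a0 / c0)).
        { rewrite RtoC_div by auto. toC. 
          assert (Hc : RtoC c0 <> 0) by (intro Hc; apply n; apply (f_equal fst) in Hc; exact Hc).
          replace w with ((RtoC (- c0) * w + RtoC a0 - RtoC a0) / RtoC (- c0)).
          2:{ rewrite RtoC_opp. toC. field. intro Hc'; apply Hc. replace (RtoC c0) with (- - RtoC c0) by ring.
              rewrite Hc'. ring. }
          rewrite Hz. rewrite RtoC_opp. toC. field. auto. }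
        assert (Hin : in_disk (c (a + m)%nat) (r (a + m)%nat) (mobius (gam a) None)).
        { apply (proj2 (H5 a ltac:(lia) _)). exists None; split; simpl; auto. }
        rewrite <- EM in Hin. simpl in Hin. destruct (Req_dec_T c0 0); [contradiction|].
        apply in_disk_some in Hin. rewrite Ew in Hw. unfold Defs.RtoC, RtoC in *. lra. }
    split; [exact Hdn|].
    apply Rnot_lt_le. intro Hq.
    assert (Hin : in_disk (c (a + m)%nat) (r (a + m)%nat) (mobius (gam a) (Some (mobius_fin (M2inv M) w)))).
    { apply (proj2 (H5 a ltac:(lia) _)). eexists; split; [|reflexivity]. apply in_ext_some. exact Hq. }
    rewrite <- EM in Hin.
    destruct (mob_some M (mobius_fin (M2inv M) w)) as [Hn | [Hd Hs]].
    + rewrite Hn in Hin; exact Hin.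
    + rewrite Hs in Hin. apply in_disk_some in Hin.
      destruct (comp M (M2inv M) w Hdn Hd) as [Hc _].
      rewrite <- Hc, M2mul_inv_r in Hin by auto. rewrite (proj1 (mf_id w)) in Hin. lra.
  - rewrite M2inv_inv.
    assert (Hk : (1 <= a - m <= m)%nat) by lia.
    assert (Hin : in_disk (c (a - m + m)%nat) (r (a - m + m)%nat) (mobius (gam (a - m)%nat) (@Some Cx w))).
    { apply (proj2 (H5 (a - m)%nat Hk _)). eexists; split; [|reflexivity]. apply in_ext_some. exact Hw. }
    replace (a - m + m)%nat with a in Hin by lia.
    destruct (mob_some (gam (a - m)%nat) w) as [Hn | [Hd Hs]].
    + rewrite Hn in Hin; destruct Hin.
    + rewrite Hs in Hin. apply in_disk_some in Hin. split; [auto|lra].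
Qed.


Lemma gap_lemma m c r gam i k (x y : C) : schottky_data m c r gam -> valid_idx m i -> valid_idx m k -> i <> k ->
  Cmod (x - RtoC (c i)) <= r i -> Cmod (y - RtoC (c k)) <= r k ->
  Rabs (c i - c k) - r i - r k <= Cmod (x - y).
Proof.
  intros (H1 & H2 & H3 & H4 & H5) Hi Hk Hik Hx Hy.
  rewrite <- Cmod_R, RtoC_minus.
  assert (E : RtoC (c i) - RtoC (c k) = - (x - RtoC (c i)) + (x - y) + (y - RtoC (c k))) by (toC; ring).
  rewrite E.
  pose proof (Cmod_triangle (- (x - RtoC (c i)) + (x - y)) (y - RtoC (c k))).
  pose proof (Cmod_triangle (- (x - RtoC (c i))) (x - y)).
  rewrite Cmod_opp in H0. lra.
Qed.

Lemma disj_lemma m c r gam i k (x : C) : schottky_data m c r gam -> valid_idx m i -> valid_idx m k -> i <> k ->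
  Cmod (x - RtoC (c i)) <= r i -> Cmod (x - RtoC (c k)) <= r k -> False.
Proof.
  intros HS Hi Hk Hik Hx Hy. pose proof (gap_lemma m c r gam i k x x HS Hi Hk Hik Hx Hy).
  replace (x - x) with (RtoC 0) in H by (toC; ring). rewrite Cmod_0 in H.
  destruct HS as (H1 & H2 & H3 & _). specialize (H3 i k Hi Hk Hik). lra.
Qed.

Lemma word_nil m j l : in_Wj m 0 j l -> l = nil.
Proof. intros [[H _] _]. destruct l; [auto| discriminate]. Qed.

Definition Pt m gam (z : Cx) l := mobius_fin (M2inv (word_eval m gam l)) z.

Lemma P_snoc m c r gam j (z : Cx) u a : schottky_data m c r gam ->
  dn (M2inv (word_eval m gam u)) z <> 0 ->
  Cmod (Pt m gam z u - RtoC (c (last u j))) <= r (last u j) ->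
  valid_idx m (last u j) -> valid_idx m a -> a <> opp_idx m (last u j) ->
  Pt m gam z (u ++ a :: nil) = mobius_fin (M2inv (gen m gam a)) (Pt m gam z u) /\
  dn (M2inv (gen m gam a)) (Pt m gam z u) <> 0 /\
  dn (M2inv (word_eval m gam (u ++ a :: nil))) z <> 0 /\
  Cmod (Pt m gam z (u ++ a :: nil) - RtoC (c a)) <= r a.
Proof.
  intros HS Hd Hc Hb Ha Hab.
  set (b := last u j) in *.
  assert (Hout : r (opp_idx m a) < Cmod (Pt m gam z u - RtoC (c (opp_idx m a)))).
  { apply Rnot_le_lt; intro Hle.
    apply (disj_lemma m c r gam b (opp_idx m a) (Pt m gam z u) HS Hb (oppidx_valid m a Ha)); auto.
    intro E; apply Hab; rewrite E, oppidx_inv; auto. }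
  destruct (map_gen m c r gam a (Pt m gam z u) HS Ha Hout) as [Hd2 Hc2].
  unfold Pt in *.
  rewrite word_eval_snoc, M2inv_mul.
  destruct (comp (M2inv (gen m gam a)) (M2inv (word_eval m gam u)) z Hd Hd2) as [E1 E2].
  rewrite E1, E2. repeat split; auto. apply Cmult_neq_0; auto.
Qed.

Lemma loc m c r gam j (z : Cx) : schottky_data m c r gam -> valid_idx m j ->
  Cmod (z - RtoC (c j)) < r j ->
  forall n l, in_Wj m n j l ->
  dn (M2inv (word_eval m gam l)) z <> 0 /\
  Cmod (Pt m gam z l - RtoC (c (last l j))) <= r (last l j).
Proof.
  intros HS Hj Hz n. induction n; intros l Hl.
  - rewrite (word_nil m j l Hl). unfold Pt; simpl. rewrite M2inv_id.
    destruct (mf_id z) as [E1 E2]. rewrite E1, E2. split; [|lra].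
    intro H; apply (f_equal fst) in H; simpl in H; lra.
  - destruct (Wj_snoc m n j l Hl) as (u & a & E & Hu & Ha & Hab). subst l.
    destruct (IHn u Hu) as [Hd Hc].
    assert (Hb : valid_idx m (last u j)) by (apply last_valid; auto; apply Hu).
    destruct (P_snoc m c r gam j z u a HS Hd Hc Hb Ha Hab) as (_ & _ & H3 & H4).
    rewrite last_last. auto.
Qed.


Lemma consts m c r gam : schottky_data m c r gam -> exists delta Bd, 0 < delta /\ 1 <= Bd /\
  (forall i k, valid_idx m i -> valid_idx m k -> i <> k -> delta <= Rabs (c i - c k) - r i - r k) /\
  (forall a b (x : C), valid_idx m a -> valid_idx m b -> Cmod (x - RtoC (c b)) <= r b ->
     Cmod (dn (M2inv (gen m gam a)) x) <= Bd).
Proof.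
  intros HS. pose proof HS as (H1 & H2 & H3 & H4 & H5).
  set (g := (fun i k => if excluded_middle_informative (valid_idx m i /\ valid_idx m k /\ i <> k)
                       then (Rabs (c i - c k) - r i - r k)%R else 1%R) : nat -> nat -> R).
  assert (gpos : forall i k, 0 < g i k).
  { intros i k; unfold g; destruct excluded_middle_informative as [(Hi & Hk & Hik)|]; [|lra].
    specialize (H3 i k Hi Hk Hik). lra. }
  destruct (fin_max (fun b => (Rabs (c b) + r b)%R) (2 * m)) as [R1 HR1].
  destruct (fin_max (fun a => (Rabs (m21 (M2inv (gen m gam a))) + Rabs (m22 (M2inv (gen m gam a))))%R) (2 * m))
    as [E HE].
  exists (minf (fun i => minf (g i) (2 * m)) (2 * m)), (Rabs E * (Rabs R1 + 1) + 1)%R.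
  split; [|split; [|split]].
  - apply minf_pos; intros; apply minf_pos; intros; apply gpos.
  - pose proof (Rabs_pos E); pose proof (Rabs_pos R1); nra.
  - intros i k Hi Hk Hik.
    eapply Rle_trans; [apply (minf_le _ _ i); destruct Hi; lia|]. cbv beta.
    eapply Rle_trans; [apply (minf_le _ _ k); destruct Hk; lia|].
    unfold g; destruct excluded_middle_informative as [_|n]; [lra|tauto].
  - intros a b x Ha Hb Hx.
    assert (Hxb : Cmod x <= Rabs R1 + 1).
    { replace x with ((x - RtoC (c b)) + RtoC (c b)) by (toC; ring).
      eapply Rle_trans; [apply Cmod_triangle|]. rewrite Cmod_R.
      specialize (HR1 b ltac:(destruct Hb; lia)). cbv beta in HR1.
      pose proof (Rle_abs R1). lra. }
    specialize (HE a ltac:(destruct Ha; lia)). cbv beta in HE.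
    unfold dn. eapply Rle_trans; [apply Cmod_triangle|]. rewrite Cmod_mult, !Cmod_R.
    set (u := Rabs (m21 (M2inv (gen m gam a)))) in *.
    set (v := Rabs (m22 (M2inv (gen m gam a)))) in *.
    assert (0 <= u) by apply Rabs_pos. assert (0 <= v) by apply Rabs_pos.
    pose proof (Cmod_ge_0 x). pose proof (Rle_abs E). pose proof (Rabs_pos R1).
    assert (u * Cmod x <= u * (Rabs R1 + 1))%R by (apply Rmult_le_compat_l; auto).
    assert ((u + v) * (Rabs R1 + 1) <= Rabs E * (Rabs R1 + 1))%R by (apply Rmult_le_compat_r; lra).
    nra.
Qed.


Lemma sep m c r gam j (z : Cx) delta Bd : schottky_data m c r gam -> valid_idx m j ->
  Cmod (z - RtoC (c j)) < r j -> 0 < delta -> 1 <= Bd ->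
  (forall i k, valid_idx m i -> valid_idx m k -> i <> k -> delta <= Rabs (c i - c k) - r i - r k) ->
  (forall a b (x : C), valid_idx m a -> valid_idx m b -> Cmod (x - RtoC (c b)) <= r b ->
     Cmod (dn (M2inv (gen m gam a)) x) <= Bd) ->
  forall n l1 l2, in_Wj m n j l1 -> in_Wj m n j l2 -> l1 <> l2 ->
  (delta * (/ (Bd * Bd)) ^ n <= Cmod (Pt m gam z l1 - Pt m gam z l2))%R.
Proof.
  intros HS Hj Hz Hdel HBd Hgap Hbd n.
  assert (Hq : (0 < / (Bd * Bd) <= 1)%R).
  { split; [apply Rinv_0_lt_compat; nra|]. rewrite <- Rinv_1. apply Rinv_le_contravar; nra. }
  induction n; intros l1 l2 H1 H2 Hne.
  - rewrite (word_nil m j l1 H1), (word_nil m j l2 H2) in Hne. congruence.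
  - destruct (Wj_snoc m n j l1 H1) as (u & a & E1 & Hu & Ha & Hau).
    destruct (Wj_snoc m n j l2 H2) as (v & b & E2 & Hv & Hb & Hbv). subst l1 l2.
    destruct (loc m c r gam j z HS Hj Hz n u Hu) as [Hdu Hcu].
    destruct (loc m c r gam j z HS Hj Hz n v Hv) as [Hdv Hcv].
    assert (Hvu : valid_idx m (last u j)) by (apply last_valid; auto; apply Hu).
    assert (Hvv : valid_idx m (last v j)) by (apply last_valid; auto; apply Hv).
    destruct (P_snoc m c r gam j z u a HS Hdu Hcu Hvu Ha Hau) as (Eu & Du & _ & Cu).
    destruct (P_snoc m c r gam j z v b HS Hdv Hcv Hvv Hb Hbv) as (Ev & Dv & _ & Cv).
    pose proof (pow_le1 (/ (Bd * Bd)) (S n) ltac:(lra)).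
    pose proof (pow_le (/ (Bd * Bd)) (S n) ltac:(lra)).
    destruct (Nat.eq_dec a b) as [<-|Hab].
    + assert (Huv : u <> v) by (intro; subst; congruence).
      specialize (IHn u v Hu Hv Huv).
      rewrite Eu, Ev. rewrite mf_diff.
      2:{ rewrite M2det_inv. eapply gen_det; eauto. }
      2,3: auto.
      rewrite Cmod_div by (apply Cmult_neq_0; auto). rewrite Cmod_mult.
      set (X := Cmod (Pt m gam z u - Pt m gam z v)) in *.
      set (d1 := Cmod (dn (M2inv (gen m gam a)) (Pt m gam z u))).
      set (d2 := Cmod (dn (M2inv (gen m gam a)) (Pt m gam z v))).
      assert (Hd1 : (0 < d1 <= Bd)%R) by (split; [apply Cmod_gt_0; auto| apply (Hbd a (last u j)); auto]).
      assert (Hd2 : (0 < d2 <= Bd)%R) by (split; [apply Cmod_gt_0; auto| apply (Hbd a (last v j)); auto]).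
      assert (Hinv : (/ (Bd * Bd) <= / (d1 * d2))%R) by (apply Rinv_le_contravar; nra).
      pose proof (pow_le (/ (Bd * Bd)) n ltac:(lra)).
      simpl. unfold Rdiv.
      assert (0 <= delta * (/ (Bd * Bd)) ^ n)%R by nra.
      assert (HH : (delta * (/ (Bd * Bd) * (/ (Bd * Bd)) ^ n) = (delta * (/ (Bd * Bd)) ^ n) * / (Bd * Bd))%R) by ring.
      rewrite HH.
      apply Rmult_le_compat; auto; lra.
    + pose proof (Hgap a b Ha Hb Hab).
      pose proof (gap_lemma m c r gam a b _ _ HS Ha Hb Hab Cu Cv).
      nra.
Qed.


Lemma dist_bridge m gam (z : Cx) al be :
  Cabs (Csub (mobius_fin (M2inv (word_eval m gam al)) z) (mobius_fin (M2inv (word_eval m gam be)) z))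
  = Cmod (Pt m gam z al - Pt m gam z be).
Proof. rewrite Cabs_eq. reflexivity. Qed.

Lemma peq_same m c r gam j (z : Cx) n al be : schottky_data m c r gam -> valid_idx m j ->
  Cmod (z - RtoC (c j)) < r j -> in_Wj m n j al -> in_Wj m n j be ->
  peq (M2mul (word_eval m gam al) (M2inv (word_eval m gam be))) M2id ->
  Cmod (Pt m gam z al - Pt m gam z be) = 0%R.
Proof.
  intros HS Hj Hz Ha Hb Hp.
  assert (Hdb : M2det (word_eval m gam be) = 1%R) by (eapply word_det; eauto; apply Hb).
  assert (E : word_eval m gam al = M2mul (M2mul (word_eval m gam al) (M2inv (word_eval m gam be))) (word_eval m gam be)).
  { rewrite M2mul_assoc, M2mul_inv_l, M2mul_id_r; auto. }
  destruct Hp as [Hp|Hp]; rewrite Hp in E.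
  - rewrite M2mul_id_l in E. unfold Pt. rewrite E.
    replace (mobius_fin (M2inv (word_eval m gam be)) z - mobius_fin (M2inv (word_eval m gam be)) z) with (RtoC 0)
      by (toC; ring). apply Cmod_0.
  - rewrite M2mul_neg_l, M2mul_id_l in E. unfold Pt. rewrite E, M2inv_neg, mf_neg.
    + replace (mobius_fin (M2inv (word_eval m gam be)) z - mobius_fin (M2inv (word_eval m gam be)) z) with (RtoC 0)
        by (toC; ring). apply Cmod_0.
    + apply (loc m c r gam j z HS Hj Hz n be Hb).
Qed.

End Aux.

Theorem lemma5p3 :
  forall (m : nat) (c r : nat -> R) (gam : nat -> M2),
  schottky_data m c r gam ->
  forall C : R, 0 < C ->
  exists h1 eps0 : R, 0 < h1 < 1 /\ 0 < eps0 /\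
  forall h : R, 0 < h < h1 ->
  forall (S : M2 -> Prop) (reps : list M2),
  is_subgroup m gam S -> is_right_transversal m gam S reps ->
  forall l0 : R, is_min_geod_length S l0 ->
  forall N : nat, INR N <= eps0 * (l0 + ln (/ h)) ->
  forall j : nat, valid_idx m j ->
  forall z : Cx, in_disk (c j) (r j) (Some z) ->
  forall alpha beta : list nat, in_Wj m N j alpha -> in_Wj m N j beta ->
  ind_trace S reps (M2mul (word_eval m gam alpha) (M2inv (word_eval m gam beta))) <> 0%nat ->
  Cabs (Csub (mobius_fin (M2inv (word_eval m gam alpha)) z)
             (mobius_fin (M2inv (word_eval m gam beta)) z)) < C * h ->
  alpha = beta.
Proof.
  intros m c r gam HS C HC.
  destruct (Aux.consts m c r gam HS) as (delta & Bd & Hdel & HBd & Hgap & Hbd).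
  destruct (fin_max (fun a => Frob (gen m gam a)) (2 * m)) as [G0 HG0].
  set (G := Rmax 1 G0).
  assert (HG1 : 1 <= G) by apply Rmax_l.
  assert (HG : forall a, valid_idx m a -> Frob (gen m gam a) <= G).
  { intros a Ha. eapply Rle_trans; [apply (HG0 a); destruct Ha; lia| apply Rmax_r]. }
  set (a0 := ln (G * G)). set (b0 := ln 18). set (kq := ln (Bd * Bd)).
  assert (Ha0 : 0 <= a0) by (unfold a0; rewrite <- ln_1; apply ln_le'; nra).
  assert (Hb0 : 0 <= b0) by (unfold b0; rewrite <- ln_1; apply ln_le'; lra).
  assert (Hkq : 0 <= kq) by (unfold kq; rewrite <- ln_1; apply ln_le'; nra).
  set (K0 := ln C - ln delta).
  set (X := Rabs (3 * K0 + b0)).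
  set (eps0 := / (4 * (a0 + kq + 1))).
  assert (Heps : 0 < eps0) by (unfold eps0; apply Rinv_0_lt_compat; lra).
  assert (Hea : eps0 * a0 <= 1/4).
  { unfold eps0. apply (Rmult_le_reg_l (4 * (a0 + kq + 1))); [lra|].
    field_simplify; lra. }
  assert (Hek : eps0 * kq <= 1/4).
  { unfold eps0. apply (Rmult_le_reg_l (4 * (a0 + kq + 1))); [lra|].
    field_simplify; lra. }
  exists (Rmin (1/2) (exp (- X))), eps0.
  split; [split; [apply Rmin_glb_lt; [lra| apply exp_pos] | eapply Rle_lt_trans; [apply Rmin_l|lra]]|].
  split; [exact Heps|].
  intros h Hh S reps HSub Htrans l0 Hl0 N HN j Hj z Hz alpha beta Hal Hbe Htr Hdist.
  destruct (list_eq_dec Nat.eq_dec alpha beta) as [|Hne]; [assumption|exfalso].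
  apply Aux.in_disk_some in Hz.
  rewrite Aux.dist_bridge in Hdist.
  pose proof (Aux.sep m c r gam j z delta Bd HS Hj Hz Hdel HBd Hgap Hbd N alpha beta Hal Hbe Hne) as Hsep.
  set (g := M2mul (word_eval m gam alpha) (M2inv (word_eval m gam beta))) in *.
  set (q := / (Bd * Bd)) in *.
  assert (Hq : 0 < q) by (unfold q; apply Rinv_0_lt_compat; nra).
  assert (HqN : 0 < q ^ N) by (apply pow_lt; auto).
  destruct (trace_witness S reps g Htr) as (rr & Hin & HSr).
  assert (Hrr : in_Gamma m gam rr) by (destruct Htrans as [Hf _]; rewrite Forall_forall in Hf; auto).
  assert (Hdr : M2det rr = 1) by (eapply Gamma_det; eauto).
  assert (Hnp : ~ peq (M2mul (M2mul rr g) (M2inv rr)) M2id).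
  { intros [Hp|Hp].
    - assert (Hg : peq g M2id).
      { left. rewrite <- (conj_back rr g Hdr), Hp, M2mul_id_r, M2mul_inv_l; auto. }
      pose proof (Aux.peq_same m c r gam j z N alpha beta HS Hj Hz Hal Hbe Hg).
      pose proof (Rmult_lt_0_compat _ _ Hdel HqN). lra.
    - assert (Hg : peq g M2id).
      { right. rewrite <- (conj_back rr g Hdr), Hp, M2mul_neg_r, M2mul_neg_l, M2mul_id_r, M2mul_inv_l; auto. }
      pose proof (Aux.peq_same m c r gam j z N alpha beta HS Hj Hz Hal Hbe Hg).
      pose proof (Rmult_lt_0_compat _ _ Hdel HqN). lra. }
  assert (Hl0g : l0 <= hyp_length g).
  { destruct Hl0 as [_ Hmin]. pose proof (Hmin _ HSr Hnp) as HH.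
    unfold hyp_length in *. rewrite M2tr_conj, Hdr, Rmult_1_l in HH. exact HH. }
  assert (HF : Frob g <= 4 * (G * G) ^ N).
  { unfold g. eapply Rle_trans; [apply Frob_mul|]. rewrite Frob_inv.
    destruct Hal as [[La [Va _]] _]. destruct Hbe as [[Lb [Vb _]] _].
    pose proof (Frob_word m gam G alpha HG1 HG Va) as F1.
    pose proof (Frob_word m gam G beta HG1 HG Vb) as F2.
    rewrite La in F1. rewrite Lb in F2.
    rewrite Rpow_mult_distr.
    pose proof (Frob_ge0 (word_eval m gam alpha)). pose proof (Frob_ge0 (word_eval m gam beta)).
    assert (Frob (word_eval m gam alpha) * Frob (word_eval m gam beta) <= (2 * G ^ N) * (2 * G ^ N))
      by (apply Rmult_le_compat; auto).
    lra. }
  assert (HGN : 1 <= (G * G) ^ N) by (apply pow_R1_Rle; nra).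
  assert (Hl0b : l0 <= b0 + INR N * a0).
  { eapply Rle_trans; [apply Hl0g|]. eapply Rle_trans; [apply hyp_bound|].
    set (t := M2tr g) in *. pose proof (tr_Frob g) as Ht. fold t in Ht.
    pose proof (Rabs_pos t). pose proof (Rsqr_abs t). unfold Rsqr in *.
    assert (Hsq : (Rabs t + 1) * (Rabs t + 1) <= 18 * (G * G) ^ N) by nra.
    assert (E2 : 2 * ln (Rabs t + 1) = ln ((Rabs t + 1) * (Rabs t + 1))) by (rewrite ln_mult; lra).
    rewrite E2. unfold b0, a0. rewrite <- ln_pow by nra. rewrite <- ln_mult by lra.
    apply ln_le'; nra. }
  assert (HL : ln (/ h) < K0 + INR N * kq).
  { assert (Hlt : delta * q ^ N < C * h) by lra.
    apply ln_increasing in Hlt; [|nra].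
    rewrite ln_mult in Hlt by lra. rewrite ln_mult in Hlt by lra.
    rewrite ln_pow in Hlt by lra. unfold q in Hlt. rewrite ln_Rinv in Hlt by nra.
    rewrite ln_Rinv by lra. unfold K0, kq. lra. }
  assert (HhX : ln (/ h) > X).
  { assert (h < exp (- X)) by (eapply Rlt_le_trans; [apply Hh| apply Rmin_r]).
    rewrite <- (ln_exp X). apply ln_increasing; [apply exp_pos|].
    rewrite <- (Rinv_inv (exp X)). apply Rinv_lt_contravar; [apply Rmult_lt_0_compat; [lra| apply Rinv_0_lt_compat, exp_pos]|].
    rewrite <- exp_Ropp. lra. }
  set (L := ln (/ h)) in *.
  assert (HX : 0 <= X) by apply Rabs_pos.
  assert (HNpos : 0 <= INR N) by apply pos_INR.
  assert (H1 : eps0 * l0 <= eps0 * b0 + eps0 * a0 * INR N).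
  { assert (eps0 * l0 <= eps0 * (b0 + INR N * a0)) by (apply Rmult_le_compat_l; lra). lra. }
  assert (H2 : eps0 * a0 * INR N <= 1/4 * INR N) by (apply Rmult_le_compat_r; lra).
  assert (H3 : INR N <= 4/3 * (eps0 * (b0 + L))) by lra.
  assert (H4 : INR N * kq <= 4/3 * (eps0 * kq) * (b0 + L)).
  { assert (INR N * kq <= 4/3 * (eps0 * (b0 + L)) * kq) by (apply Rmult_le_compat_r; lra). lra. }
  assert (H5 : 4/3 * (eps0 * kq) * (b0 + L) <= 4/3 * (1/4) * (b0 + L)).
  { apply Rmult_le_compat_r; lra. }
  pose proof (Rle_abs (3 * K0 + b0)). fold X in H.
  lra.
Qed.
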